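(* Let $\alpha,\beta<1$ be real numbers. Let $A,B\subset\mathbb{N}$ be such that $A(X)\ge C\frac{\sqrt{X}}{(\log X)^{\alpha}}$ and $B(X)\ge C\frac{\sqrt{X}}{(\log X)^{\beta}}$ for some constant $C>0$ and all sufficiently large $X$. Then there is a constant $C'>0$ such that for all sufficiently large $X$, $$\sum_{\substack{a\in A,\ b\in B\\ ab\le X}}1\ge C'\sqrt{X}(\log X)^{1-\alpha-\beta}.$$
   Context: $\mathbb{N}$ is the set of positive integers; for $S\subset\mathbb{N}_0$, $S(X)=|S\cap[1,X]|$. *)

(* Defs.v *)
From Stdlib Require Import Reals Lra Lia List.
Open Scope R_scope.

(* floor of a nonnegative real, as a natural number (0 for negative X) *)
Definition nfloor (X : R) : nat := Z.to_nat (Int_part X).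

(* S(X) = |S ∩ [1, X]|, S given by its (boolean) indicator on nat *)
Definition count_upto (S : nat -> bool) (X : R) : nat :=
  length (filter S (seq 1 (nfloor X))).

Definition pair_count (A B : nat -> bool) (X : R) : nat :=
  length (filter (fun p : nat * nat =>
                    (A (fst p) && B (snd p) && Nat.leb (fst p * snd p) (nfloor X))%bool)
                 (list_prod (seq 1 (nfloor X)) (seq 1 (nfloor X)))).

(* Main.v *)
Require Import Defs.
From Stdlib Require Import Reals Lra Lia List.
Open Scope R_scope.

Definition cnt (P : nat -> bool) (n : nat) : nat := length (filter P (seq 1 n)).

Lemma cnt_S P n : cnt P (S n) = (cnt P n + (if P (S n) then 1 else 0))%nat.
Proof.
  unfold cnt. rewrite seq_S, filter_app, length_app. simpl.
  destruct (P (S n)); simpl; lia.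
Qed.

Fixpoint rsN (f : nat -> nat) (n : nat) : nat :=
  match n with O => O | S k => (rsN f k + f (S k))%nat end.
Fixpoint rs (f : nat -> R) (n : nat) : R :=
  match n with O => 0 | S k => rs f k + f (S k) end.

Lemma list_prod_count {X Y : Type} (P : X * Y -> bool) l1 l2 :
  length (filter P (list_prod l1 l2)) =
  list_sum (map (fun x => length (filter (fun y => P (x, y)) l2)) l1).
Proof.
  induction l1 as [|x l IH]; simpl; auto.
  rewrite filter_app, length_app, filter_map_swap, length_map, IH. reflexivity.
Qed.

Lemma list_sum_seq g n : list_sum (map g (seq 1 n)) = rsN g n.
Proof.
  induction n; [reflexivity|].
  rewrite seq_S, map_app, list_sum_app, IHn. simpl. lia.
Qed.

Lemma rs_S f n : rs f (S n) = rs f n + f (S n).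
Proof. reflexivity. Qed.

Lemma rsN_mono f g n : (forall a, (1 <= a <= n)%nat -> (f a <= g a)%nat) -> (rsN f n <= rsN g n)%nat.
Proof.
  induction n; simpl; intros H; auto.
  assert (rsN f n <= rsN g n)%nat by (apply IHn; intros; apply H; lia).
  specialize (H (S n)). lia.
Qed.

Lemma rsN_le f m n : (m <= n)%nat -> (rsN f m <= rsN f n)%nat.
Proof. induction 1; simpl; lia. Qed.

Lemma INR_rsN f n : INR (rsN f n) = rs (fun a => INR (f a)) n.
Proof. induction n; simpl; auto. rewrite plus_INR, IHn. reflexivity. Qed.

Lemma rs_ext f g n : (forall a, (1 <= a <= n)%nat -> f a = g a) -> rs f n = rs g n.
Proof.
  induction n; simpl; intros H; auto.
  rewrite IHn by (intros; apply H; lia). rewrite H by lia. reflexivity.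
Qed.

Lemma rs_mono f g n : (forall a, (1 <= a <= n)%nat -> f a <= g a) -> rs f n <= rs g n.
Proof.
  induction n; simpl; intros H; [lra|].
  assert (rs f n <= rs g n) by (apply IHn; intros; apply H; lia).
  specialize (H (S n)). assert (f (S n) <= g (S n)) by (apply H; lia). lra.
Qed.

Lemma rs_nonneg f n : (forall a, (1 <= a <= n)%nat -> 0 <= f a) -> 0 <= rs f n.
Proof.
  intros H. replace 0 with (rs (fun _ => 0) n).
  - apply rs_mono; auto.
  - induction n; simpl; auto. rewrite IHn; [lra|]. intros; apply H; lia.
Qed.

Lemma rs_range_mono f g m n : (m <= n)%nat ->
  (forall a, (m < a <= n)%nat -> f a <= g a) -> rs f n - rs f m <= rs g n - rs g m.
Proof.
  induction 1; intros Hfg; [lra|]. simpl.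
  assert (rs f m0 - rs f m <= rs g m0 - rs g m) by (apply IHle; intros; apply Hfg; lia).
  assert (f (S m0) <= g (S m0)) by (apply Hfg; lia). lra.
Qed.

Lemma rs_scale k f n : rs (fun a => k * f a) n = k * rs f n.
Proof. induction n; simpl; [ring|]. rewrite IHn. ring. Qed.

Lemma abel (c h : nat -> R) n : c O = 0 ->
  rs (fun a => (c a - c (pred a)) * h a) (S n) =
  c (S n) * h (S n) + rs (fun a => c a * (h a - h (S a))) n.
Proof.
  intros H0. induction n.
  - simpl. rewrite H0. ring.
  - change (rs (fun a => (c a - c (pred a)) * h a) (S (S n))) with
      (rs (fun a => (c a - c (pred a)) * h a) (S n) + (c (S (S n)) - c (S n)) * h (S (S n))).
    rewrite IHn. simpl. ring.
Qed.

Lemma ln_le' x y : 0 < x -> x <= y -> ln x <= ln y.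
Proof. intros. destruct (Req_dec x y); [subst; lra|]. left; apply ln_increasing; lra. Qed.

Lemma exp_le' x y : x <= y -> exp x <= exp y.
Proof. intros. destruct (Req_dec x y); [subst; lra|]. left; apply exp_increasing; lra. Qed.

Lemma ln_le_sub1 y : 0 < y -> ln y <= y - 1.
Proof. intros. pose proof (exp_ineq1_le (ln y)). rewrite exp_ln in H0 by lra. lra. Qed.

Lemma harmonic m n : (m <= n)%nat ->
  ln (INR n + 1) - ln (INR m + 1) <= rs (fun i => / INR i) n - rs (fun i => / INR i) m.
Proof.
  induction 1; [lra|]. rewrite rs_S.
  assert (Hp : 0 < INR m0 + 1) by (pose proof (pos_INR m0); lra).
  assert (ln (INR (S m0) + 1) - ln (INR m0 + 1) <= / INR (S m0)).
  { rewrite S_INR.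
    replace (INR m0 + 1 + 1) with ((INR m0 + 1) * (1 + / (INR m0 + 1))) by (field; lra).
    rewrite ln_mult; [| lra | pose proof (Rinv_0_lt_compat _ Hp); lra].
    pose proof (ln_le_sub1 (1 + / (INR m0 + 1))). 
    pose proof (Rinv_0_lt_compat _ Hp). assert (0 < 1 + / (INR m0 + 1)) by lra.
    specialize (H0 H2). lra. }
  rewrite S_INR in *. lra.
Qed.

Lemma RP_bound k g L t : 1 <= k -> 0 < L -> 0 < t -> L <= k * t -> t <= L ->
  Rpower t g <= exp (Rabs g * ln k) * Rpower L g.
Proof.
  intros Hk HL Ht H1 H2. unfold Rpower. rewrite <- exp_plus. apply exp_le'.
  assert (ln t <= ln L) by (apply ln_le'; lra).
  assert (ln L <= ln k + ln t) by (rewrite <- ln_mult by lra; apply ln_le'; lra).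
  assert (0 <= ln k) by (rewrite <- ln_1; apply ln_le'; lra).
  destruct (Rle_dec 0 g).
  - rewrite Rabs_right by lra. nra.
  - rewrite Rabs_left by lra. nra.
Qed.

Lemma sqrt_diff a : 1 <= a -> / (6 * a * sqrt a) <= / sqrt a - / sqrt (a + 1).
Proof.
  intros Ha. set (u := sqrt a). set (v := sqrt (a + 1)).
  assert (Hu2 : u * u = a) by (apply sqrt_sqrt; lra).
  assert (Hv2 : v * v = a + 1) by (apply sqrt_sqrt; lra).
  assert (Hu : 0 < u) by (apply sqrt_lt_R0; lra).
  assert (Hv : 0 < v) by (apply sqrt_lt_R0; lra).
  assert (Hu1 : 1 <= u) by nra.
  assert (Hvu : u <= v) by nra.
  assert (Hv2u : v <= 2 * u) by nra.
  rewrite <- Hu2.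
  assert (E : / u - / v = / (u * v * (u + v))).
  { assert (Hd : (v - u) * (u + v) = 1) by (replace ((v-u)*(u+v)) with (v*v - u*u) by ring; lra).
    assert (Hd2 : v - u = / (u + v)).
    { apply Rmult_eq_reg_r with (u + v); [| lra]. rewrite Rinv_l by lra. exact Hd. }
    replace (/ u - / v) with ((v - u) / (u * v)) by (field; lra).
    rewrite Hd2. field. lra. }
  rewrite E. apply Rinv_le_contravar.
  - apply Rmult_lt_0_compat; nra.
  - nra.
Qed.

Lemma nfloor_INR n : nfloor (INR n) = n.
Proof.
  unfold nfloor, Int_part. rewrite <- (up_tech (INR n) (Z.of_nat n)).
  - replace (Z.of_nat n + 1 - 1)%Z with (Z.of_nat n) by lia. apply Znat.Nat2Z.id.
  - rewrite INR_IZR_INZ; lra.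
  - rewrite plus_IZR, <- INR_IZR_INZ; simpl; lra.
Qed.

Lemma count_upto_INR P n : count_upto P (INR n) = cnt P n.
Proof. unfold count_upto. rewrite nfloor_INR. reflexivity. Qed.

Lemma nfloor_bounds X : 0 <= X -> INR (nfloor X) <= X /\ X - 1 < INR (nfloor X).
Proof.
  intros HX. destruct (base_Int_part X) as [H1 H2].
  assert (Hz : (0 <= Int_part X)%Z).
  { destruct (Z.le_gt_cases 0 (Int_part X)); auto.
    assert (IZR (Int_part X) <= -1) by (apply IZR_le; lia). lra. }
  unfold nfloor. rewrite INR_IZR_INZ, Znat.Z2Nat.id by exact Hz. lra.
Qed.

Lemma pair_ge (A B : nat -> bool) (X : R) (T : nat) : (T <= nfloor X)%nat ->
  (rsN (fun a => if A a then cnt B (nfloor X / a) else 0%nat) T <= pair_count A B X)%nat.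
Proof.
  intros HT. unfold pair_count. set (N := nfloor X) in *.
  rewrite list_prod_count, list_sum_seq.
  eapply Nat.le_trans; [| apply rsN_le; exact HT].
  apply rsN_mono. intros a Ha. simpl. destruct (A a) eqn:EA; [|lia]. simpl.
  assert (Hq : (N / a <= N)%nat) by (apply Nat.Div0.div_le_upper_bound; nia).
  assert (E : seq 1 N = seq 1 (N/a) ++ seq (1 + N/a) (N - N/a)) by (rewrite <- seq_app; f_equal; lia).
  rewrite E, filter_app, length_app. unfold cnt.
  rewrite (filter_ext_in (fun y => (B y && (a * y <=? N))%bool) B (seq 1 (N / a))). { lia. }
  intros b Hb. apply in_seq in Hb. destruct (B b); simpl; auto.
  apply Nat.leb_le. pose proof (Nat.Div0.mul_div_le N a).
  assert (a * b <= a * (N / a))%nat by (apply Nat.mul_le_mono_l; lia). lia.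
Qed.

Lemma Rdiv_le_0_compat x y : 0 <= x -> 0 < y -> 0 <= x / y.
Proof. intros. unfold Rdiv. apply Rmult_le_pos; auto. left; apply Rinv_0_lt_compat; auto. Qed.

Theorem lemma2p2 (alpha beta : R) (A B : nat -> bool) :
  alpha < 1 -> beta < 1 ->
  (exists C : R, C > 0 /\ exists X0 : R, forall X : R, X >= X0 ->
      INR (count_upto A X) >= C * sqrt X / Rpower (ln X) alpha /\
      INR (count_upto B X) >= C * sqrt X / Rpower (ln X) beta) ->
  exists C' : R, C' > 0 /\ exists X0 : R, forall X : R, X >= X0 ->
      INR (pair_count A B X) >= C' * sqrt X * Rpower (ln X) (1 - alpha - beta).
Proof.
  intros _ _ [C [HC [X0 HX]]].
  set (Ma := exp (Rabs alpha * ln 16)). set (Mb := exp (Rabs beta * ln 16)).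
  assert (HMa : 0 < Ma) by apply exp_pos. assert (HMb : 0 < Mb) by apply exp_pos.
  exists (C * C / (384 * Ma * Mb)). split.
  { apply Rlt_gt. unfold Rdiv. apply Rmult_lt_0_compat; [nra|].
    apply Rinv_0_lt_compat. nra. }
  assert (Hl2 : 0 < ln 2) by (rewrite <- ln_1; apply ln_increasing; lra).
  assert (Hl4 : 0 < ln 4) by (rewrite <- ln_1; apply ln_increasing; lra).
  assert (Hl16 : 0 < ln 16) by (rewrite <- ln_1; apply ln_increasing; lra).
  assert (HlX0 : 0 < ln (Rabs X0 + 2)).
  { rewrite <- ln_1; apply ln_increasing; pose proof (Rabs_pos X0); lra. }
  set (K0 := 3 + 8 * ln 4 + 16 * ln 2 + 16 * ln (Rabs X0 + 2)).
  exists (exp K0). intros X HX1.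
  assert (HK0 : 3 <= K0) by (unfold K0; lra).
  assert (HXpos : 0 < X) by (pose proof (exp_pos K0); lra).
  set (L := ln X).
  assert (HL : K0 <= L) by (unfold L; rewrite <- (ln_exp K0); apply ln_le'; [apply exp_pos | lra]).
  assert (HLb : 8 * ln 4 <= L /\ 16 * ln 2 <= L /\ 16 * ln (Rabs X0 + 2) <= L) by (unfold K0 in HL; lra).
  destruct HLb as [HLb1 [HLb2 HLb3]].
  assert (HX4 : 4 <= X) by (pose proof (exp_ineq1_le K0); lra).
  set (N := nfloor X).
  destruct (nfloor_bounds X) as [HN1 HN2]; [lra|]. fold N in HN1, HN2.
  assert (HN4 : (4 <= N)%nat).
  { destruct (Nat.le_gt_cases 4 N); auto. assert (INR N <= 3) by (replace 3 with (INR 3) by (simpl; lra); apply le_INR; lia). lra. }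
  set (T := Nat.sqrt N). set (s0 := Nat.sqrt T).
  destruct (Nat.sqrt_spec N) as [HT1 HT2]; [lia|]. fold T in HT1, HT2.
  destruct (Nat.sqrt_spec T) as [HS1 HS2]; [lia|]. fold s0 in HS1, HS2.
  assert (HT2' : (2 <= T)%nat) by (change 2%nat with (Nat.sqrt 4); apply Nat.sqrt_le_mono; lia).
  assert (HS1' : (1 <= s0)%nat) by (change 1%nat with (Nat.sqrt 2); apply Nat.sqrt_le_mono; lia).
  assert (HST : (s0 < T)%nat) by (apply Nat.sqrt_lt_lin; lia).
  assert (HTN : (T <= N)%nat) by nia.
  assert (rT1 : 2 <= INR T) by (replace 2 with (INR 2) by (simpl; lra); apply le_INR; lia).
  assert (rS1 : 1 <= INR s0) by (replace 1 with (INR 1) by (simpl; lra); apply le_INR; lia).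
  assert (rST : INR s0 <= INR T) by (apply le_INR; lia).
  assert (rTN : INR T <= INR N) by (apply le_INR; lia).
  assert (lnT_up : ln (INR T) <= L) by (apply ln_le'; lra).
  assert (lnT_lo : L / 4 <= ln (INR T)).
  { assert (X < 4 * (INR T * INR T)).
    { assert (INR (N + 1) <= INR (S T * S T)) by (apply le_INR; lia).
      rewrite plus_INR, mult_INR, !S_INR in H. change (INR 0) with 0 in H.
      assert (0 <= (INR T - 1) * (3 * INR T + 1)) by (apply Rmult_le_pos; lra). nra. }
    assert (L < ln 4 + (ln (INR T) + ln (INR T))).
    { rewrite <- !ln_mult by lra. apply ln_increasing; lra. }
    lra. }
  assert (lnS_lo : L / 16 <= ln (INR s0)).
  { assert (INR T < 4 * (INR s0 * INR s0)).
    { assert (INR (T + 1) <= INR (Datatypes.S s0 * Datatypes.S s0)) by (apply le_INR; lia).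
      rewrite plus_INR, mult_INR, !S_INR in H. change (INR 0) with 0 in H.
      assert (0 <= (INR s0 - 1) * (3 * INR s0 + 1)) by (apply Rmult_le_pos; lra). nra. }
    assert (ln (INR T) < ln 4 + (ln (INR s0) + ln (INR s0))).
    { rewrite <- !ln_mult by lra. apply ln_increasing; lra. }
    lra. }
  assert (lnTS : L / 16 <= ln (INR T) - ln (INR s0 + 1)).
  { assert (ln (INR s0 + 1) <= ln 2 + ln (INR s0)).
    { rewrite <- ln_mult by lra. apply ln_le'; lra. }
    assert (ln (INR s0) + ln (INR s0) <= ln (INR T)).
    { rewrite <- ln_mult by lra. apply ln_le'; [nra|].
      rewrite <- mult_INR. apply le_INR; lia. }
    lra. }
  assert (HSX0 : X0 <= INR s0).
  { destruct (Rle_lt_dec (Rabs X0 + 2) (INR s0)) as [h|h].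
    - pose proof (Rle_abs X0). lra.
    - assert (ln (INR s0) < ln (Rabs X0 + 2)) by (apply ln_increasing; lra).
      unfold K0 in HL. lra. }
  assert (HL0 : 0 < L) by lra.
  set (c := fun a => INR (cnt A a)).
  set (H := C * sqrt (INR N) / (2 * Mb * Rpower L beta)).
  assert (HRPb : 0 < Rpower L beta) by apply exp_pos.
  assert (HRPa : 0 < Rpower L alpha) by apply exp_pos.
  assert (HNpos : 0 < INR N) by lra.
  assert (HH : 0 <= H).
  { unfold H. apply Rmult_le_pos; [ apply Rmult_le_pos; [lra | apply sqrt_pos] |].
    left; apply Rinv_0_lt_compat; nra. }
  set (h := fun a => H / sqrt (INR a)).
  set (kappa := C * H / (6 * Ma * Rpower L alpha)).
  assert (St1 : rs (fun a => INR (if A a then cnt B (N / a) else 0%nat)) T <= INR (pair_count A B X)).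
  { rewrite <- INR_rsN. apply le_INR. apply pair_ge. exact HTN. }
  assert (Hdiff : forall a, (1 <= a)%nat -> H * / (6 * INR a * sqrt (INR a)) <= h a - h (Datatypes.S a)).
  { intros a Ha. unfold h. rewrite S_INR.
    assert (1 <= INR a) by (replace 1 with (INR 1) by (simpl; lra); apply le_INR; lia).
    pose proof (sqrt_diff (INR a) H0).
    replace (H / sqrt (INR a) - H / sqrt (INR a + 1)) with (H * (/ sqrt (INR a) - / sqrt (INR a + 1))) by (unfold Rdiv; ring).
    apply Rmult_le_compat_l; auto. }
  assert (Hdpos : forall a, (1 <= a)%nat -> 0 <= h a - h (Datatypes.S a)).
  { intros a Ha. eapply Rle_trans; [|apply Hdiff; auto].
    assert (1 <= INR a) by (replace 1 with (INR 1) by (simpl; lra); apply le_INR; lia).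
    assert (0 < sqrt (INR a)) by (apply sqrt_lt_R0; lra).
    apply Rmult_le_pos; auto. left. apply Rinv_0_lt_compat. nra. }
  assert (FB : forall a, (1 <= a <= T)%nat -> h a <= INR (cnt B (N / a))).
  { intros a Ha. set (Y := (N / a)%nat).
    assert (HY1 : (T <= Y)%nat) by (apply Nat.div_le_lower_bound; nia).
    assert (HY2 : (Y <= N)%nat) by (apply Nat.Div0.div_le_upper_bound; nia).
    assert (HY3 : (N <= 2 * (a * Y))%nat).
    { pose proof (Nat.div_mod N a). pose proof (Nat.mod_upper_bound N a). fold Y in H0. nia. }
    assert (rY1 : INR T <= INR Y) by (apply le_INR; lia).
    assert (rY2 : INR Y <= INR N) by (apply le_INR; lia).
    assert (rY3 : INR N <= 2 * (INR a * INR Y)).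
    { replace 2 with (INR 2) by (simpl; lra). rewrite <- !mult_INR. apply le_INR; lia. }
    assert (ra : 1 <= INR a) by (replace 1 with (INR 1) by (simpl; lra); apply le_INR; lia).
    destruct (HX (INR Y)) as [_ HB]; [lra|]. rewrite count_upto_INR in HB. apply Rge_le in HB.
    assert (HlnY1 : L / 4 <= ln (INR Y)) by (pose proof (ln_le' (INR T) (INR Y)); lra).
    assert (HlnY2 : ln (INR Y) <= L) by (unfold L; apply ln_le'; lra).
    assert (HRP : Rpower (ln (INR Y)) beta <= Mb * Rpower L beta).
    { apply RP_bound; lra. }
    assert (HRPY : 0 < Rpower (ln (INR Y)) beta) by apply exp_pos.
    set (sa := sqrt (INR a)). set (sY := sqrt (INR Y)). set (sN := sqrt (INR N)).
    assert (Hsa : 0 < sa) by (apply sqrt_lt_R0; lra).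
    assert (HsY : 0 <= sY) by apply sqrt_pos.
    assert (HsN : sN <= 2 * sa * sY).
    { unfold sN, sa, sY. rewrite Rmult_assoc, <- sqrt_mult by lra.
      replace 2 with (sqrt (2 * 2)) at 1 by (rewrite sqrt_square; lra).
      rewrite <- sqrt_mult by nra. apply sqrt_le_1; nra. }
    eapply Rle_trans; [|exact HB].
    apply Rle_trans with (C * sY / (Mb * Rpower L beta)).
    - unfold h, H. fold sN. fold sa.
      apply Rle_trans with ((C / (2 * Mb * Rpower L beta * sa)) * (2 * sa * sY)).
      + replace (C * sN / (2 * Mb * Rpower L beta) / sa) with ((C / (2 * Mb * Rpower L beta * sa)) * sN) by (field; lra).
        apply Rmult_le_compat_l; auto. left. apply Rdiv_lt_0_compat; [lra|]. nra.
      + right. field. lra.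
    - unfold Rdiv. apply Rmult_le_compat_l; [apply Rmult_le_pos; [lra | apply sqrt_pos]|]. apply Rinv_le_contravar; auto. }
  set (f := fun a => (c a - c (pred a)) * h a).
  assert (St2 : rs f T <= rs (fun a => INR (if A a then cnt B (N / a) else 0%nat)) T).
  { apply rs_mono. intros a Ha. unfold f, c. destruct a as [|a']; [lia|].
    rewrite cnt_S, plus_INR. simpl pred. destruct (A (Datatypes.S a')).
    - change (INR 1) with 1. replace (INR (cnt A a') + 1 - INR (cnt A a')) with 1 by ring.
      rewrite Rmult_1_l. apply FB. lia.
    - change (INR 0) with 0. right; ring. }
  set (g := fun a => c a * (h a - h (Datatypes.S a))).
  pose proof (abel c h (pred T) (ltac:(reflexivity))) as Eab.
  rewrite (Nat.succ_pred_pos T) in Eab by lia. fold f g in Eab.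
  assert (HcT : 0 <= c T * h T).
  { apply Rmult_le_pos; [apply pos_INR|]. unfold h. unfold Rdiv. apply Rmult_le_pos; auto.
    left. apply Rinv_0_lt_compat, sqrt_lt_R0. lra. }
  assert (Hgs : 0 <= rs g s0).
  { apply rs_nonneg. intros a Ha. apply Rmult_le_pos; [apply pos_INR| apply Hdpos; lia]. }
  assert (St5 : rs (fun a => kappa * / INR a) (pred T) - rs (fun a => kappa * / INR a) s0 <= rs g (pred T) - rs g s0).
  { apply rs_range_mono; [lia|]. intros a Ha.
    assert (ra : INR s0 <= INR a) by (apply le_INR; lia).
    assert (raT : INR a <= INR T) by (apply le_INR; lia).
    destruct (HX (INR a)) as [HA _]; [lra|]. rewrite count_upto_INR in HA. apply Rge_le in HA.
    assert (Hln1 : L / 16 <= ln (INR a)) by (pose proof (ln_le' (INR s0) (INR a)); lra).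
    assert (Hln2 : ln (INR a) <= L) by (pose proof (ln_le' (INR a) (INR T)); lra).
    assert (HRP : Rpower (ln (INR a)) alpha <= Ma * Rpower L alpha) by (apply RP_bound; lra).
    assert (HRPa' : 0 < Rpower (ln (INR a)) alpha) by apply exp_pos.
    assert (Hsa : 0 < sqrt (INR a)) by (apply sqrt_lt_R0; lra).
    assert (Hc : C * sqrt (INR a) / (Ma * Rpower L alpha) <= c a).
    { eapply Rle_trans; [|exact HA]. unfold Rdiv. apply Rmult_le_compat_l; [nra|].
      apply Rinv_le_contravar; auto. }
    pose proof (Hdiff a ltac:(lia)) as Hd.
    unfold g. apply Rle_trans with ((C * sqrt (INR a) / (Ma * Rpower L alpha)) * (H * / (6 * INR a * sqrt (INR a)))).
    - right. unfold kappa. field. repeat split; lra.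
    - apply Rmult_le_compat; auto.
      + apply Rdiv_le_0_compat; nra.
      + apply Rmult_le_pos; auto. left; apply Rinv_0_lt_compat. nra. }
  rewrite !rs_scale in St5.
  pose proof (harmonic s0 (pred T) ltac:(lia)) as Hh.
  rewrite <- S_INR, (Nat.succ_pred_pos T) in Hh by lia.
  assert (Hkap : 0 <= kappa).
  { unfold kappa. apply Rdiv_le_0_compat; [nra|]. nra. }
  assert (St6 : kappa * (L / 16) <= INR (pair_count A B X)).
  { assert (kappa * (L / 16) <= kappa * (rs (fun i => / INR i) (pred T) - rs (fun i => / INR i) s0)).
    { apply Rmult_le_compat_l; auto. lra. }
    lra. }
  apply Rle_ge. eapply Rle_trans; [|exact St6].
  replace (1 - alpha - beta) with (1 + - alpha + - beta) by ring.
  rewrite !Rpower_plus, !Rpower_Ropp, Rpower_1 by lra. fold L.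
  assert (HsX : sqrt X <= 2 * sqrt (INR N)).
  { replace 2 with (sqrt (2 * 2)) at 1 by (rewrite sqrt_square; lra).
    rewrite <- sqrt_mult by nra. apply sqrt_le_1; nra. }
  apply Rle_trans with (C * C / (384 * Ma * Mb) * (L * / Rpower L alpha * / Rpower L beta) * (2 * sqrt (INR N))).
  - replace (C * C / (384 * Ma * Mb) * sqrt X * (L * / Rpower L alpha * / Rpower L beta))
      with (C * C / (384 * Ma * Mb) * (L * / Rpower L alpha * / Rpower L beta) * sqrt X) by ring.
    apply Rmult_le_compat_l; auto.
    apply Rmult_le_pos; [apply Rdiv_le_0_compat; nra|].
    apply Rmult_le_pos; [apply Rmult_le_pos; [lra|]|]; left; apply Rinv_0_lt_compat; auto.
  - right. unfold kappa, H. field. repeat split; lra.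
Qed.
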